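(* Let $n\ge1$, $D\ge1$, and let $X_n=\{\mathbf{x}^0,\ldots,\mathbf{x}^{n-1}\}\subseteq\{0,1\}^D$ consist of $n$ pairwise distinct vectors, indexed so that $\mathbf{a}\cdot\mathbf{x}^0<\cdots<\mathbf{a}\cdot\mathbf{x}^{n-1}$ for some $\mathbf{a}\in\mathbb{Z}^D$. Then there is a four-layer Boolean threshold network with $D$ input nodes, $3\lceil\sqrt n\rceil+D$ hidden nodes in total (in layers $2$ and $3$), and $\lceil\log_2 n\rceil$ output nodes that maps $\mathbf{x}^i$ to the $\lceil\log_2 n\rceil$-dimensional binary representation of $i$, for every $i=0,\ldots,n-1$.
   Context: A Boolean threshold function is a map $\{0,1\}^h\to\{0,1\}$, $\mathbf{u}\mapsto[\mathbf{w}\cdot\mathbf{u}\ge\theta]$ (value $1$ iff $\mathbf{w}\cdot\mathbf{u}\ge\theta$) with $\mathbf{w}\in\mathbb{Z}^h,\theta\in\mathbb{Z}$. An $L$-layer Boolean threshold network has layers $1,\ldots,L$; layer $1$ is the input; each node of layer $t+1$ computes a Boolean threshold function of the values of layer $t$; the network computes the map input $\mapsto$ values of layer $L$; layers $2,\ldots,L-1$ are hidden. *)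

(* Defs.v *)
From mathcomp Require Import all_boot all_order all_algebra.
Set Implicit Arguments. Unset Strict Implicit. Unset Printing Implicit Defensive.
Import Order.TTheory GRing.Theory Num.Theory.
Local Open Scope ring_scope.

Definition b2z (b : bool) : int := Posz (nat_of_bool b).

Definition dotz (h : nat) (w : 'I_h -> int) (u : 'I_h -> bool) : int :=
  \sum_(k < h) w k * b2z (u k).

Definition threshold (h : nat) (w : 'I_h -> int) (theta : int)
  (u : 'I_h -> bool) : bool := theta <= dotz w u.

Definition tlayer (h k : nat) (W : 'I_k -> 'I_h -> int) (th : 'I_k -> int)
  (u : 'I_h -> bool) : 'I_k -> bool :=
  fun j => threshold (W j) (th j) u.

Definition ceil_sqrt (n : nat) : nat :=
  find (fun s => (n <= s * s)%N) (iota 0 n.+1).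

Definition ceil_log2 (n : nat) : nat := up_log 2 n.

Definition bit (i j : nat) : bool := odd (i %/ 2 ^ j).

(* Main.v *)
Require Import Defs.
From mathcomp Require Import all_boot all_order all_algebra.
From mathcomp Require Import zify ring lra.
Import Order.TTheory GRing.Theory Num.Theory.
Local Open Scope ring_scope.

Lemma tele0 (F : nat -> int) (M : nat) :
  \sum_(0 <= c < M) (F c.+1 - F c) = F M - F 0%N.
Proof.
elim: M => [|M IH]; first by rewrite big_geq // subrr.
rewrite big_nat_recr //= IH; ring.
Qed.

Lemma tele (F : nat -> int) (M P : nat) : (P <= M)%N ->
  \sum_(0 <= c < M) (F c.+1 - F c) * b2z (c < P)%N = F P - F 0%N.
Proof.
move=> hPM.
rewrite (big_cat_nat _ (n:=P)) //=.
rewrite (eq_big_nat _ _ (F2 := fun c => F c.+1 - F c)); last first.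
  by move=> c /andP[_ hc]; rewrite hc /b2z mulr1.
rewrite tele0 [X in _ + X]big_nat big1 ?addr0 // => c /andP[hc _].
by rewrite ltnNge hc /b2z mulr0.
Qed.

Lemma sum_zero a b (F : nat -> int) :
  (forall u, (a <= u < b)%N -> F u = 0) -> \sum_(a <= u < b) F u = 0.
Proof. by move=> H; rewrite big_nat big1. Qed.

Lemma sum_shift m K (F : nat -> int) :
  \sum_(m <= u < m + K) F u = \sum_(0 <= r < K) F (r + m)%N.
Proof. by rewrite -{1}(add0n m) big_addn addKn. Qed.

Lemma sum_delta h K (G : nat -> int) : (K < h)%N ->
  \sum_(0 <= v < h) (if v == K then G v else 0) = G K.
Proof.
move=> hK; rewrite (big_cat_nat _ (n:=K)) //= ?(ltnW hK) //.
rewrite sum_zero ?add0r; last by move=> u /andP[_ hu]; rewrite ltn_eqF.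
rewrite big_ltn // eqxx sum_zero ?addr0 // => u /andP[hu _].
by rewrite gtn_eqF.
Qed.

Lemma dotz_nat h (f : nat -> int) (g : nat -> bool) (u : 'I_h -> bool) :
  (forall k : 'I_h, u k = g k) ->
  dotz (fun k : 'I_h => f k) u = \sum_(0 <= k < h) f k * b2z (g k).
Proof. by move=> H; rewrite /dotz big_mkord; apply: eq_bigr => k _; rewrite H. Qed.

Lemma thr1 (b : bool) : (1 <= b2z b) = b.
Proof. by case: b. Qed.

Lemma ceil_sqrtP n : (n <= ceil_sqrt n * ceil_sqrt n)%N.
Proof.
have hh : has (fun s => n <= s * s)%N (iota 0 n.+1).
  apply/hasP; exists n; first by rewrite mem_iota /=.
  by case: n => // n; rewrite leq_pmulr.
have := nth_find 0%N hh; rewrite /ceil_sqrt nth_iota //.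
by move: hh; rewrite has_find size_iota.
Qed.

Lemma bit_low i k j : (j < k)%N -> bit i j = bit (i %% 2 ^ k) j.
Proof.
move=> hj; rewrite /bit {1}(divn_eq i (2 ^ k)).
have -> : (2 ^ k = 2 ^ (k - j) * 2 ^ j)%N by rewrite -expnD subnK // ltnW.
rewrite mulnA divnMDl ?expn_gt0 // oddD oddM oddX /=.
by rewrite subn_eq0 leqNgt hj andbF.
Qed.

Lemma bit_high i k j : (k <= j)%N -> bit i j = bit (i %/ 2 ^ k) (j - k).
Proof. by move=> hj; rewrite /bit -divnMA -expnD subnKC. Qed.
Theorem theorem15 (n D : nat) (hn : (1 <= n)%N) (hD : (1 <= D)%N)
  (x : 'I_n -> 'I_D -> bool)
  (hdist : forall i j : 'I_n, i <> j -> exists k, x i k <> x j k)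
  (hord : exists a : 'I_D -> int,
      forall i j : 'I_n, (i < j)%N -> dotz a (x i) < dotz a (x j)) :
  exists (h2 h3 : nat),
    (h2 + h3 = 3 * ceil_sqrt n + D)%N /\
    exists (W1 : 'I_h2 -> 'I_D -> int) (t1 : 'I_h2 -> int)
           (W2 : 'I_h3 -> 'I_h2 -> int) (t2 : 'I_h3 -> int)
           (W3 : 'I_(ceil_log2 n) -> 'I_h3 -> int) (t3 : 'I_(ceil_log2 n) -> int),
      forall (i : 'I_n) (j : 'I_(ceil_log2 n)),
        tlayer W3 t3 (tlayer W2 t2 (tlayer W1 t1 (x i))) j = bit i j.
Proof.
case: n hn x hdist hord => [//|n'] _ x _ [a ha].
case: D hD x a ha => [//|D'] _ x a ha.
pose A (c : nat) : int := dotz a (x (inord c)).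
have Amono : forall (c : nat) (i : 'I_n'.+1), (c < n'.+1)%N ->
    (A c <= dotz a (x i)) = (c <= i)%N.
  move=> c i hc; rewrite /A.
  have hcv : c = (inord c : 'I_n'.+1) :> nat by rewrite inordK.
  rewrite [X in (X <= _)%N]hcv; case: (ltngtP (inord c : 'I_n'.+1) i) => h.
  - by rewrite (ltW (ha _ _ h)).
  - by apply/negbTE; rewrite -ltNge; apply: ha.
  - by rewrite (val_inj h) lexx.
pose s := ceil_sqrt n'.+1.
pose k0 := up_log 2 s. pose B := (2 ^ k0)%N.
pose M := (n' %/ B)%N. pose m := M.+1.
have hs : (n'.+1 <= s * s)%N by apply: ceil_sqrtP.
have hs1 : (0 < s)%N by case: (s) hs => //; rewrite muln0.
have hB1 : (s <= B)%N by apply: up_logP.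
have hB0 : (0 < B)%N by rewrite expn_gt0.
have hB2 : (B <= 2 * s)%N.
  case: (ltnP 1 s) => hs2.
    have := up_log_gtn (isT : (1 < 2)%N) hs2; rewrite -/k0 /B.
    case: (k0) => [|k] /=; first by lia.
    by rewrite expnS; lia.
  have -> : s = 1%N by lia.
  by rewrite /B /k0 (_ : s = 1%N) ?up_log1 //; lia.
have hMB : (M * B <= n')%N by apply: leq_trunc_div.
have hbudget : (2 * M + B < 3 * s)%N.
  have h1 : (2 * M * B + B * B < 3 * s * B)%N.
    have : (s * s + B * B <= 3 * s * B)%N by nia.
    by nia.
  by nia.
pose T (c r : nat) : int :=
  if (c * B + r < n'.+1)%N then A (c * B + r)%N else A n' + 1.
pose w1 (v k : nat) : int := if (v < m)%N then a (inord k) else b2z (k == v - m)%N.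
pose t1 (v : nat) : int := if (v < m)%N then A (v * B)%N else 1.
pose g2 (i : 'I_n'.+1) (v : nat) : bool :=
  if (v < m)%N then (v <= i %/ B)%N else x i (inord (v - m)).
have hiM : forall i : 'I_n'.+1, (i %/ B <= M)%N.
  by move=> i; apply: leq_div2r; rewrite -ltnS.
have L2 : forall (i : 'I_n'.+1) (v : 'I_(m + D'.+1)),
    tlayer (fun v k => w1 v k) (fun v => t1 v) (x i) v = g2 i v.
  move=> i v; rewrite /tlayer /threshold /g2 /t1.
  case: ifP => hv.
    have -> : dotz (fun k : 'I_D'.+1 => w1 v k) (x i) = dotz a (x i).
      by apply: eq_bigr => k _; rewrite /w1 hv inord_val.
    rewrite Amono; first by rewrite leq_divRL.
    have : (v * B <= M * B)%N by rewrite leq_mul2r -ltnS hv orbT.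
    by lia.
  rewrite (@dotz_nat _ (w1 v) (fun k => x i (inord k))); last first.
    by move=> k; rewrite inord_val.
  rewrite /w1 hv.
  rewrite (eq_big_nat _ _ (F2 := fun k => if k == (v - m)%N then b2z (x i (inord k)) else 0)); last first.
    by move=> k _; case: eqP => _; rewrite ?mul1r ?mul0r.
  rewrite sum_delta ?thr1 //.
  by have := ltn_ord v; lia.
have hAi : forall i : 'I_n'.+1, dotz a (x i) = A i.
  by move=> i; rewrite /A inord_val.
pose w2 (u v : nat) : int :=
  if (u < m)%N then b2z (v == u)
  else if (u < m + B.-1)%N then
    (if (v < m)%N then (if v is v'.+1 then - (T v (u - m).+1 - T v' (u - m).+1) else 0)
     else a (inord (v - m)))
  else 0.
pose t2 (u : nat) : int :=
  if (u < m)%N then 1 else if (u < m + B.-1)%N then T 0%N (u - m).+1 else 1.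
pose g3 (i : 'I_n'.+1) (u : nat) : bool :=
  if (u < m)%N then (u <= i %/ B)%N
  else if (u < m + B.-1)%N then (u - m < i %% B)%N else false.
have L3 : forall (i : 'I_n'.+1) (u : 'I_(3 * s - m)),
    tlayer (fun (u : 'I_(3 * s - m)) (v : 'I_(m + D'.+1)) => w2 u v) (fun u => t2 u)
      (tlayer (fun (v : 'I_(m + D'.+1)) k => w1 v k) (fun v => t1 v) (x i)) u = g3 i u.
  move=> i u; rewrite /tlayer /threshold.
  rewrite (@dotz_nat _ (w2 u) (g2 i)); last by move=> v; apply: L2.
  rewrite /t2 /g3 /w2.
  case: ifP => hu1.
    rewrite (eq_big_nat _ _ (F2 := fun v => if v == u :> nat then b2z (g2 i v) else 0)); last first.
      by move=> k _; case: eqP => _; rewrite ?mul1r ?mul0r.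
    by rewrite sum_delta ?thr1 /g2 ?hu1 //; lia.
  case: ifP => hu2; last first.
    by rewrite sum_zero // => v _; rewrite mul0r.
  set r := (u - m)%N.
  rewrite (big_cat_nat _ (n := m)) //=; last by lia.
  rewrite (sum_shift m).
  rewrite [X in _ + X](eq_big_nat _ _ (F2 := fun k => a (inord k) * b2z (x i (inord k)))); last first.
    move=> k _; have hk : (k + m < m)%N = false by lia.
    by rewrite /g2 hk addnK.
  rewrite -(@dotz_nat _ (fun k => a (inord k)) (fun k => x i (inord k)) (x i)); last first.
    by move=> k; rewrite inord_val.
  have -> : dotz (fun k : 'I_D'.+1 => a (inord k)) (x i) = A i.
    by rewrite -hAi; apply: eq_bigr => k _; rewrite inord_val.
  rewrite big_nat_recl //= mul0r add0r.
  rewrite (eq_big_nat _ _ (F2 := fun v => - ((T v.+1 r.+1 - T v r.+1) * b2z (v < i %/ B)%N))); last first.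
    by move=> v /andP[_ hv]; rewrite /g2 ltnS hv mulNr.
  rewrite sumrN tele //.
  have -> : (T 0%N r.+1 <= - (T (i %/ B)%N r.+1 - T 0%N r.+1) + A i) = (T (i %/ B)%N r.+1 <= A i).
    by apply/idP/idP; lra.
  have hdi := div.divn_eq i B.
  have hq : (i %% B < B)%N by rewrite ltn_mod.
  rewrite /T; case: ifP => hc.
    rewrite -hAi Amono //.
    by lia.
  have h1 : (A i <= A n').
    have := Amono i (inord n') (ltn_ord i).
    rewrite inordK // -ltnS ltn_ord -hAi => h; exact: h.
  have h2 : (r < i %% B)%N = false.
    apply/negbTE/negP => h3.
    have : (i < n'.+1)%N := ltn_ord i.
    by lia.
  rewrite h2; apply/negbTE; rewrite -ltNge; lra.
pose w3 (j u : nat) : int :=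
  if (j < k0)%N then
    (if (m <= u < m + B.-1)%N then b2z (bit (u - m).+1 j) - b2z (bit (u - m) j) else 0)
  else (if (u < m)%N then
          (if u is u'.+1 then b2z (bit u (j - k0)) - b2z (bit u' (j - k0)) else 0)
        else 0).
have bit0 : forall j, bit 0 j = false by move=> j; rewrite /bit div0n.
exists (m + D'.+1)%N, (3 * s - m)%N; split; first by lia.
exists (fun v k => w1 v k), (fun v => t1 v), (fun u v => w2 u v), (fun u => t2 u),
  (fun j u => w3 j u), (fun _ => 1).
move=> i j.
rewrite {1}/tlayer /threshold.
rewrite (@dotz_nat _ (w3 j) (g3 i)); last by move=> u; apply: L3.
have hq : (i %% B < B)%N by rewrite ltn_mod.
rewrite /w3; case hj: (j < k0)%N; rewrite /=.
  rewrite (big_cat_nat _ (n := m)) //=; last by lia.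
  rewrite [X in _ + X](big_cat_nat _ (n := (m + B.-1)%N)) //=; [|lia|lia].
  rewrite [X in X + (_ + _)]sum_zero; last first.
    by move=> u /andP[_ hu]; rewrite leqNgt hu /= mul0r.
  rewrite [X in _ + (_ + X)]sum_zero; last first.
    by move=> u /andP[hu _]; rewrite ltnNge hu andbF mul0r.
  rewrite add0r addr0 (sum_shift m).
  rewrite (eq_big_nat _ _ (F2 := fun r => (b2z (bit r.+1 j) - b2z (bit r j)) * b2z (r < i %% B)%N)); last first.
    move=> r /andP[_ hr].
    have e1 : (m <= r + m < m + B.-1)%N by lia.
    have e2 : (r + m < m)%N = false by lia.
    by rewrite e1 /g3 e2 (_ : (r + m < m + B.-1)%N) ?addnK //; lia.
  rewrite tele; last by lia.
  by rewrite bit0 subr0 thr1 -bit_low.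
rewrite (big_cat_nat _ (n := m)) //=; last by lia.
rewrite [X in _ + X]sum_zero; last first.
  by move=> u /andP[hu _]; rewrite ltnNge hu mul0r.
rewrite addr0 big_nat_recl //= mul0r add0r.
rewrite (eq_big_nat _ _ (F2 := fun u => (b2z (bit u.+1 (j - k0)) - b2z (bit u (j - k0))) * b2z (u < i %/ B)%N)); last first.
  by move=> u /andP[_ hu]; rewrite ltnS hu /g3 ltnS hu.
rewrite tele //.
by rewrite bit0 subr0 thr1 -bit_high // leqNgt hj.
Qed.
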